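(* Let $n\ge 1$ be an integer and let $f:\mathbb{R}\to\mathbb{R}$ be a discontinuous additive function whose graph $G(f)$ is connected. Then $F(x)=x^{n-1}f(x)$ is a discontinuous $n$-monomial function whose graph $G(F)=\{(x,F(x)):x\in\mathbb{R}\}$ is connected.
   Context: For $h\in\mathbb{R}$, $\Delta_h f(x)=f(x+h)-f(x)$ and $\Delta_h^{n}=\Delta_h\circ\Delta_h^{n-1}$. A function $f:\mathbb{R}\to\mathbb{R}$ is an $n$-monomial function if $\frac{1}{n!}\Delta_h^n f(x)=f(h)$ for all $x,h\in\mathbb{R}$. An additive function satisfies $f(x+y)=f(x)+f(y)$ for all $x,y$. The graph of a function $g$ is $G(g)=\{(x,g(x))\}\subseteq\mathbb{R}^2$. *)

(* Defs.v *)
From Stdlib Require Import Reals Factorial.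
Open Scope R_scope.

Definition Delta (h : R) (f : R -> R) : R -> R := fun x => f (x + h) - f x.

Fixpoint Delta_n (n : nat) (h : R) (f : R -> R) : R -> R :=
  match n with
  | O => f
  | S m => Delta h (Delta_n m h f)
  end.

Definition is_monomial (n : nat) (f : R -> R) : Prop :=
  forall x h : R, / INR (fact n) * Delta_n n h f x = f h.

Definition additive (f : R -> R) : Prop :=
  forall x y : R, f (x + y) = f x + f y.

Definition dist2 (p q : R * R) : R :=
  sqrt ((fst p - fst q) ^ 2 + (snd p - snd q) ^ 2).

Definition open2 (U : R * R -> Prop) : Prop :=
  forall p, U p -> exists eps : R, 0 < eps /\ forall q, dist2 p q < eps -> U q.

Definition connected2 (S : R * R -> Prop) : Prop :=
  ~ exists U V : R * R -> Prop,
      open2 U /\ open2 V /\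
      (forall p, S p -> U p \/ V p) /\
      (forall p, S p -> U p -> V p -> False) /\
      (exists p, S p /\ U p) /\ (exists p, S p /\ V p).

Definition graph (g : R -> R) : R * R -> Prop := fun p => snd p = g (fst p).

(* Main.v *)
From Pilot Require Import Defs.
From Stdlib Require Import Reals Lra Lia Factorial.
Open Scope R_scope.

Lemma Dn_S_comm m h u x : Delta_n (S m) h u x = Delta_n m h (Pilot.Defs.Delta h u) x.
Proof.
  revert x; induction m; intro x; [reflexivity|].
  change (Delta_n (S (S m)) h u x) with (Pilot.Defs.Delta h (Delta_n (S m) h u) x).
  change (Delta_n (S m) h (Pilot.Defs.Delta h u) x) with (Pilot.Defs.Delta h (Delta_n m h (Pilot.Defs.Delta h u)) x).
  unfold Pilot.Defs.Delta at 1 3. rewrite !IHm. reflexivity.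
Qed.

Lemma Dn_ext m h g1 g2 x : (forall y, g1 y = g2 y) -> Delta_n m h g1 x = Delta_n m h g2 x.
Proof.
  intro H; revert x; induction m; intro x; simpl; [apply H|].
  unfold Pilot.Defs.Delta. rewrite !IHm. reflexivity.
Qed.

Lemma Dn_add m h u v x : Delta_n m h (fun y => u y + v y) x = Delta_n m h u x + Delta_n m h v x.
Proof.
  revert x; induction m; intro x; simpl; [reflexivity|].
  unfold Pilot.Defs.Delta. rewrite !IHm. ring.
Qed.

Lemma Dn_scal m h a u x : Delta_n m h (fun y => a * u y) x = a * Delta_n m h u x.
Proof.
  revert x; induction m; intro x; simpl; [reflexivity|].
  unfold Pilot.Defs.Delta. rewrite !IHm. ring.
Qed.

Lemma Dn_shift m h u x : Delta_n m h (fun y => u (y + h)) x = Delta_n m h u (x + h).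
Proof.
  revert x; induction m; intro x; simpl; [reflexivity|].
  unfold Pilot.Defs.Delta. rewrite !IHm. reflexivity.
Qed.

Lemma Dn_zero m h g x : (forall y, g y = 0) -> Delta_n m h g x = 0.
Proof.
  intro H; revert x; induction m; intro x; simpl; [apply H|].
  unfold Pilot.Defs.Delta. rewrite !IHm. ring.
Qed.

Section Main.
Variables (h beta : R) (v : R -> R).
Hypothesis Hv : forall y, v (y + h) = v y + beta.

Lemma Dw m u y : Delta_n (S m) h (fun z => u z * v z) y =
  beta * Delta_n m h u (y + h) + Delta_n m h (fun z => Pilot.Defs.Delta h u z * v z) y.
Proof.
  rewrite Dn_S_comm.
  rewrite (Dn_ext m h _ (fun z => beta * u (z + h) + Pilot.Defs.Delta h u z * v z)).
  - rewrite Dn_add, Dn_scal, Dn_shift. reflexivity.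
  - intro z. unfold Pilot.Defs.Delta. rewrite Hv. ring.
Qed.

Lemma main_lemma d : forall u c, (forall y, Delta_n (S d) h u y = 0) ->
  (forall y, Delta_n d h u y = c) ->
  (forall y, Delta_n (S (S d)) h (fun z => u z * v z) y = 0) /\
  (forall y, Delta_n (S d) h (fun z => u z * v z) y = INR (S d) * beta * c).
Proof.
  induction d; intros u c H1 H0.
  - simpl in H0. assert (Hu : forall z, Pilot.Defs.Delta h u z = 0).
    { intro z; unfold Pilot.Defs.Delta; rewrite !H0; ring. }
    split; intro y.
    + rewrite Dw, H1, (Dn_zero 1 h); [ring|]. intro z; rewrite Hu; ring.
    + rewrite Dw. simpl. rewrite H0, Hu. ring.
  - destruct (IHd (Pilot.Defs.Delta h u) c) as [A B].
    + intro y. rewrite <- Dn_S_comm. apply H1.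
    + intro y. rewrite <- Dn_S_comm. apply H0.
    + split; intro y.
      * rewrite Dw, H1, A. ring.
      * rewrite Dw, H0, B. rewrite (S_INR (S d)). ring.
Qed.
End Main.

Lemma pow_lemma h k : (forall y, Delta_n (S k) h (fun z => z ^ k) y = 0) /\
  (forall y, Delta_n k h (fun z => z ^ k) y = INR (fact k) * h ^ k).
Proof.
  induction k.
  - split; intro y; simpl; [unfold Pilot.Defs.Delta; ring | ring].
  - destruct IHk as [A B].
    destruct (main_lemma h h (fun z => z) (fun y => eq_refl) k (fun z => z ^ k) _ A B) as [C D].
    split; intro y.
    + rewrite <- (C y). apply Dn_ext. intro; simpl; ring.
    + rewrite (Dn_ext _ _ _ (fun z => z ^ k * z)) by (intro; simpl; ring).
      unfold is_monomial; intros. rewrite D. change (fact (S k)) with (S k * fact k)%nat. rewrite mult_INR. simpl. ring.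
Qed.

Lemma cont_eps f x0 : continuity_pt f x0 -> forall eps, 0 < eps ->
  exists d, 0 < d /\ forall x, Rabs (x - x0) < d -> Rabs (f x - f x0) < eps.
Proof.
  intros H eps He. destruct (H eps He) as [d [Hd H']]. exists d. split; auto.
  intros x Hx. destruct (Req_dec x x0).
  - subst. rewrite Rminus_diag, Rabs_R0. auto.
  - apply H'. split; [split; [exact I| auto] | simpl; unfold R_dist; auto].
Qed.

Lemma eps_cont f x0 : (forall eps, 0 < eps ->
  exists d, 0 < d /\ forall x, Rabs (x - x0) < d -> Rabs (f x - f x0) < eps) ->
  continuity_pt f x0.
Proof.
  intros H eps He. destruct (H eps He) as [d [Hd H']]. exists d. split; auto.
  intros x [_ Hx]. apply H'. exact Hx.
Qed.

Lemma dist2_fst p q : Rabs (fst p - fst q) <= dist2 p q.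
Proof.
  unfold dist2. rewrite <- (sqrt_pow2 (Rabs (fst p - fst q))) by apply Rabs_pos.
  rewrite pow2_abs. apply sqrt_le_1_alt. pose proof (pow2_ge_0 (snd p - snd q)); lra.
Qed.

Lemma dist2_snd p q : Rabs (snd p - snd q) <= dist2 p q.
Proof.
  unfold dist2. rewrite <- (sqrt_pow2 (Rabs (snd p - snd q))) by apply Rabs_pos.
  rewrite pow2_abs. apply sqrt_le_1_alt. pose proof (pow2_ge_0 (fst p - fst q)); lra.
Qed.

Lemma dist2_le p q : dist2 p q <= Rabs (fst p - fst q) + Rabs (snd p - snd q).
Proof.
  unfold dist2.
  pose proof (Rabs_pos (fst p - fst q)). pose proof (Rabs_pos (snd p - snd q)).
  rewrite <- (sqrt_pow2 (Rabs (fst p - fst q) + Rabs (snd p - snd q))) by lra.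
  apply sqrt_le_1_alt.
  pose proof (pow2_abs (fst p - fst q)). pose proof (pow2_abs (snd p - snd q)).
  nra.
Qed.

Definition Phi (k : nat) (p : R * R) : R * R := (fst p, fst p ^ k * snd p).

Lemma open_pre k U : open2 U -> open2 (fun p => U (Phi k p)).
Proof.
  intros oU p Up. destruct (oU (Phi k p) Up) as [e [He Hq]].
  set (x0 := fst p) in *. set (y0 := snd p) in *.
  assert (Hy : 0 < 4 * (Rabs y0 + 1)) by (pose proof (Rabs_pos y0); lra).
  assert (Hx : 0 < 4 * (Rabs (x0 ^ k) + 1)) by (pose proof (Rabs_pos (x0^k)); lra).
  destruct (cont_eps (fun y => y ^ k) x0
     (derivable_continuous_pt _ _ (derivable_pt_pow k x0)) (e / (4 * (Rabs y0 + 1))))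
     as [d1 [Hd1 H1]].
  { apply Rdiv_lt_0_compat; lra. }
  exists (Rmin (Rmin d1 (e / (4 * (Rabs (x0 ^ k) + 1)))) (Rmin 1 (e / 4))).
  split.
  { repeat apply Rmin_pos; try lra; apply Rdiv_lt_0_compat; lra. }
  intros q Hdq. apply Hq.
  pose proof (Rmin_l (Rmin d1 (e / (4 * (Rabs (x0 ^ k) + 1)))) (Rmin 1 (e / 4))).
  pose proof (Rmin_r (Rmin d1 (e / (4 * (Rabs (x0 ^ k) + 1)))) (Rmin 1 (e / 4))).
  pose proof (Rmin_l d1 (e / (4 * (Rabs (x0 ^ k) + 1)))).
  pose proof (Rmin_r d1 (e / (4 * (Rabs (x0 ^ k) + 1)))).
  pose proof (Rmin_l 1 (e / 4)). pose proof (Rmin_r 1 (e / 4)).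
  pose proof (dist2_fst p q) as Fx. pose proof (dist2_snd p q) as Fy.
  fold x0 y0 in Fx, Fy.
  set (x := fst q) in *. set (y := snd q) in *.
  eapply Rle_lt_trans; [apply dist2_le|]. unfold Phi; simpl. fold x0 y0 x y.
  assert (A : Rabs (x ^ k - x0 ^ k) < e / (4 * (Rabs y0 + 1))).
  { apply H1. rewrite Rabs_minus_sym. lra. }
  assert (By : Rabs y <= Rabs y0 + 1).
  { replace y with (y0 - (y0 - y)) by ring.
    pose proof (Rabs_triang y0 (- (y0 - y))) as Tr. rewrite Rabs_Ropp in Tr.
    unfold Rminus at 1. lra. }
  assert (T : Rabs (x0 ^ k * y0 - x ^ k * y) <=
     Rabs (x ^ k - x0 ^ k) * Rabs y + Rabs (x0 ^ k) * Rabs (y0 - y)).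
  { replace (x0 ^ k * y0 - x ^ k * y) with (- ((x ^ k - x0 ^ k) * y) + x0 ^ k * (y0 - y)) by ring.
    eapply Rle_trans; [apply Rabs_triang|]. rewrite Rabs_Ropp, !Rabs_mult. lra. }
  assert (T1 : Rabs (x ^ k - x0 ^ k) * Rabs y <= e / 4).
  { apply Rle_trans with (e / (4 * (Rabs y0 + 1)) * (Rabs y0 + 1)).
    - apply Rmult_le_compat; try apply Rabs_pos; lra.
    - right. field. pose proof (Rabs_pos y0). lra. }
  assert (T2 : Rabs (x0 ^ k) * Rabs (y0 - y) <= e / 4).
  { apply Rle_trans with ((Rabs (x0 ^ k) + 1) * (e / (4 * (Rabs (x0 ^ k) + 1)))).
    - apply Rmult_le_compat; try apply Rabs_pos; lra.
    - right. field. pose proof (Rabs_pos (x0 ^ k)). lra. }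
  lra.
Qed.

Theorem mainTheorem3 (n : nat) (f : R -> R) :
  (1 <= n)%nat ->
  additive f ->
  ~ continuity f ->
  connected2 (graph f) ->
  let F := fun x => x ^ (n - 1) * f x in
  is_monomial n F /\ ~ continuity F /\ connected2 (graph F).
Proof.
  intros Hn Hadd Hnc Hconn.
  destruct n as [|n']; [lia|].
  replace (S n' - 1)%nat with n' by lia. intro F.
  assert (f0 : f 0 = 0).
  { pose proof (Hadd 0 0). rewrite Rplus_0_r in H. lra. }
  split; [|split].
  - intros x h. subst F. cbv beta.
    destruct (pow_lemma h n') as [A B].
    assert (Hv : forall y, f (y + h) = f y + f h) by (intro; apply Hadd).
    destruct (main_lemma h (f h) f Hv n' _ _ A B) as [_ D].
    unfold is_monomial; intros. rewrite D. change (fact (S n')) with (S n' * fact n')%nat. rewrite mult_INR.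
    pose proof (INR_fact_neq_0 n'). pose proof (not_0_INR (S n') ltac:(lia)).
    field. auto.
  - intro HF. apply Hnc. intro y. apply eps_cont. intros eps He.
    assert (C1 : continuity_pt (F * / (fun z => z ^ n'))%F 1).
    { apply continuity_pt_mult; [apply HF|]. apply continuity_pt_inv.
      - apply derivable_continuous_pt, derivable_pt_pow.
      - rewrite pow1. lra. }
    destruct (cont_eps _ _ C1 eps He) as [d [Hd Hd']].
    exists (Rmin d (1/2)). split; [apply Rmin_pos; lra|].
    intros z Hz. pose proof (Rmin_l d (1/2)). pose proof (Rmin_r d (1/2)).
    assert (Hw : Rabs ((z - y + 1) - 1) < d) by (replace (z - y + 1 - 1) with (z - y) by ring; lra).
    specialize (Hd' _ Hw). unfold mult_fct, inv_fct, F in Hd'.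
    rewrite pow1, Rinv_1, Rmult_1_l, Rmult_1_r in Hd'.
    assert (Hw0 : z - y + 1 <> 0).
    { intro E. replace (z - y) with (- (1)) in Hz by lra. rewrite Rabs_Ropp, Rabs_R1 in Hz. lra. }
    replace ((z - y + 1) ^ n' * f (z - y + 1) * / (z - y + 1) ^ n') with (f (z - y + 1)) in Hd'
      by (field; apply pow_nonzero; auto).
    replace (f z - f y) with (f (z - y + 1) - f 1); [exact Hd'|].
    pose proof (Hadd (z - y + 1) (y - 1)). pose proof (Hadd 1 (y - 1)).
    replace (z - y + 1 + (y - 1)) with z in H1 by ring.
    replace (1 + (y - 1)) with y in H2 by ring. lra.
  - intros [U [V [oU [oV [cov [dis [[p [Gp Up]] [q [Gq Vq]]]]]]]]].
    apply Hconn. exists (fun p => U (Phi n' p)), (fun p => V (Phi n' p)).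
    assert (GP : forall p, graph f p -> graph F (Phi n' p)).
    { intros [a b] G. unfold graph, Phi, F in *; simpl in *. rewrite G. reflexivity. }
    split; [apply open_pre; auto|]. split; [apply open_pre; auto|].
    split; [intros r Gr; apply cov; auto|].
    split; [intros r Gr; apply dis; auto|].
    split.
    + destruct p as [a b]. exists (a, f a). split; [reflexivity|].
      unfold graph, F in Gp; simpl in Gp. subst b. exact Up.
    + destruct q as [a b]. exists (a, f a). split; [reflexivity|].
      unfold graph, F in Gq; simpl in Gq. subst b. exact Vq.
Qed.
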